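(* Let $1\le p<\infty$, let $f\in\mathcal U_p(\mathbb{R}^2)$, and set $\varphi_1(y)=\|f_y\|^*_{\operatorname{Lip}\frac1p}$ and $\varphi_2(x)=\|f_x\|^*_{\operatorname{Lip}\frac1p}$. Then $f\in S_0(\mathbb{R}^2)$, and there is a constant $c>0$ depending only on $p$ such that for every $t>0$, $$f^*(t)-f^*(2t)\le c\,t^{1/(2p)}\left(\varphi_1^*\!\left(\tfrac{\sqrt t}{2}\right)+\varphi_2^*\!\left(\tfrac{\sqrt t}{2}\right)\right).$$
   Context: For a function $f$ on $\mathbb{R}^2$, $f_x(y)=f(x,y)$ and $f_y(x)=f(x,y)$ denote the sections. For $\varphi$ on $\mathbb{R}$, $\Delta_h\varphi(t)=\varphi(t+h)-\varphi(t)$; for $\alpha\in(0,1]$, $\|\varphi\|^*_{\operatorname{Lip}\alpha}=\sup_{h>0}h^{-\alpha}\|\Delta_h\varphi\|_\infty$ ($\|\cdot\|_\infty$ the essential supremum), $\operatorname{Lip}\alpha$ is the class of $\varphi\in L^\infty(\mathbb{R})$ with this quantity finite, and $\|\varphi\|_{\operatorname{Lip}\alpha}=\|\varphi\|_\infty+\|\varphi\|^*_{\operatorname{Lip}\alpha}$. $S_0(\mathbb{R}^n)$ is the class of measurable a.e. finite $g$ on $\mathbb{R}^n$ with $|\{|g|>s\}|<\infty$ for all $s>0$; $g^*$ is the non-increasing rearrangement of $g$ on $(0,\infty)$ (non-negative, non-increasing, equimeasurable with $|g|$). $L^{p,1}(\mathbb{R})$ is the set of $g\in S_0(\mathbb{R})$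 with $\int_0^\infty t^{1/p-1}g^*(t)\,dt<\infty$. $\mathcal U_p(\mathbb{R}^2)$ is the set of measurable $f$ on $\mathbb{R}^2$ such that almost every $x$-section and $y$-section lies in $\operatorname{Lip}\frac1p$ and $y\mapsto\|f_y\|_{\operatorname{Lip}\frac1p}$, $x\mapsto\|f_x\|_{\operatorname{Lip}\frac1p}$ belong to $L^{p,1}(\mathbb{R})$. *)

(* Defs.v *)
From HB Require Import structures.
From mathcomp Require Import all_boot all_order all_algebra.
From mathcomp Require Import all_classical all_reals all_analysis measurable_realfun ess_sup_inf.
Set Implicit Arguments. Unset Strict Implicit. Unset Printing Implicit Defensive.
Import Order.TTheory GRing.Theory Num.Theory.
Local Open Scope classical_set_scope.
Local Open Scope ring_scope.

Section defs.
Context {R : realType}.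
Local Notation leb := (@lebesgue_measure R).

Definition leb2 := (leb \x leb)%E.

Definition S0 d (T : measurableType d) (mu : set T -> \bar R)
  (g : T -> \bar R) : Prop :=
  [/\ measurable_fun setT g,
      mu.-negligible [set x | ~ (g x \is a fin_num)] &
      forall s : R, 0 < s -> (mu [set x | s%:E < `|g x|] < +oo)%E].

Definition rearr d (T : measurableType d) (mu : set T -> \bar R)
  (g : T -> \bar R) (t : R) : \bar R :=
  ereal_inf [set s%:E | s in
     [set s : R | 0 <= s /\ (mu [set x | s%:E < `|g x|] <= t%:E)%E]].

Definition Lp1 (p : R) (g : R -> \bar R) : Prop :=
  S0 leb g /\
  (\int[leb]_(t in [set t : R | (0 < t)%R]) (EFin (powR t (p^-1 - 1)%R) * rearr leb g t) < +oo)%E.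

Definition supnorm (phi : R -> R) : \bar R :=
  ess_sup leb (fun t => (`|phi t|)%:E).

Definition Delta (h : R) (phi : R -> R) : R -> R := fun t => phi (t + h) - phi t.

Definition lipsemi (alpha : R) (phi : R -> R) : \bar R :=
  ereal_sup [set (EFin (powR h (- alpha)%R) * supnorm (Delta h phi))%E
            | h in [set h : R | (0 < h)%R]].

Definition lipnorm (alpha : R) (phi : R -> R) : \bar R :=
  (supnorm phi + lipsemi alpha phi)%E.

Definition Lip (alpha : R) (phi : R -> R) : Prop :=
  measurable_fun setT phi /\
  (supnorm phi < +oo)%E /\ (lipsemi alpha phi < +oo)%E.

(* the class U_p(R^2); sections f_x(y) = f(x,y) and f_y(x) = f(x,y) *)
Definition Up (p : R) (f : R * R -> R) : Prop :=
  [/\ measurable_fun setT f,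
      {ae leb, forall x, Lip p^-1 (fun y => f (x, y))},
      {ae leb, forall y, Lip p^-1 (fun x => f (x, y))},
      Lp1 p (fun y => lipnorm p^-1 (fun x => f (x, y))) &
      Lp1 p (fun x => lipnorm p^-1 (fun y => f (x, y)))].

End defs.

(* Main.v *)
Require Import Defs.
From HB Require Import structures.
From mathcomp Require Import all_boot all_order all_algebra.
From mathcomp Require Import all_classical all_reals all_analysis measurable_realfun ess_sup_inf.
From mathcomp Require Import ring lra.
Import Order.TTheory GRing.Theory Num.Theory.
Local Open Scope classical_set_scope.
Local Open Scope ring_scope.


Section aux.
Context {R : realType}.
Local Notation leb := (@lebesgue_measure R).
Local Open Scope ereal_scope.

Lemma pm12 (A : set (R * R)) : measurable A -> (leb \x leb) A = (leb \x^ leb) A.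
Proof.
move=> mA; apply: (@product_measure_unique _ _ _ _ _ leb leb (leb \x^ leb)) => // B C mB mC.
exact: (product_measure2E leb leb mB mC).
Qed.

Lemma pm_x0 (A : set (R * R)) : (forall x, leb (xsection A x) = 0) -> (leb \x leb) A = 0.
Proof. by move=> h; rewrite /product_measure1; apply: integral0_eq => x _ /=. Qed.

Lemma pm_y0 (A : set (R * R)) : measurable A -> (forall y, leb (ysection A y) = 0) -> (leb \x leb) A = 0.
Proof. by move=> mA h; rewrite pm12 // /product_measure2; apply: integral0_eq => x _ /=. Qed.

Lemma pm_xlb (A : set (R * R)) (X : set R) (c : R) : measurable A -> measurable X -> (0 <= c)%R ->
  (forall x, X x -> c%:E <= leb (xsection A x)) -> c%:E * leb X <= (leb \x leb) A.
Proof.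
move=> mA mX c0 h; rewrite -integral_cst //.
apply: (@le_trans _ _ (\int[leb]_(x in X) (leb \o xsection A) x)).
  apply: ge0_le_integral => //.
  - by apply: (measurable_funS measurableT) => //; exact: measurable_fun_xsection.
rewrite /product_measure1; apply: ge0_subset_integral => //.
exact: measurable_fun_xsection.
Qed.

Lemma pm_ylb (A : set (R * R)) (Y : set R) (c : R) : measurable A -> measurable Y -> (0 <= c)%R ->
  (forall y, Y y -> c%:E <= leb (ysection A y)) -> c%:E * leb Y <= (leb \x leb) A.
Proof.
move=> mA mY c0 h; rewrite pm12 // -integral_cst //.
apply: (@le_trans _ _ (\int[leb]_(y in Y) (leb \o ysection A) y)).
  apply: ge0_le_integral => //.
  - by apply: (measurable_funS measurableT) => //; exact: measurable_fun_ysection.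
rewrite /product_measure2; apply: ge0_subset_integral => //.
exact: measurable_fun_ysection.
Qed.


Lemma sup_null (psi : R -> R) (c : R) (M : set R) : supnorm psi <= c%:E ->
  measurable M -> M `<=` [set x | (c < `|psi x|)%R] -> leb M = 0.
Proof.
move=> /ess_supP [N [mN N0 sub]] mM sM.
apply: (@subset_measure0 _ _ _ leb M N mM mN _ N0) => x /sM /= cx; apply: sub => /=.
by rewrite lee_fin; apply/negP; rewrite -ltNge.
Qed.

Lemma leb_setT_gt0 : 0 < leb setT.
Proof.
apply: (@lt_le_trans _ _ (leb [set` `[0%R, 1%R]])).
  by rewrite lebesgue_measure_itv /= lte_fin ltr01 sube0 lte01.
by apply: le_measure => //; rewrite inE.
Qed.

Lemma supnorm_ge0 (psi : R -> R) : 0 <= supnorm psi.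
Proof.
apply: ess_sup_gee; first exact: leb_setT_gt0.
by apply: aeW => x; rewrite lee_fin.
Qed.

Lemma lipsemi_ge0 (a : R) (psi : R -> R) : 0 <= lipsemi a psi.
Proof.
apply: le_trans (ereal_sup_ubound _); last first.
  by exists 1%R => //=; rewrite ltr01.
by rewrite powR1 mul1e supnorm_ge0.
Qed.

Lemma outer_cover (D : set R) : exists U, [/\ measurable U, D `<=` U & leb U = leb D].
Proof.
have [G [oG DG eG]] := outer_measure_Gdelta D.
exists (\bigcap_i G i); split => //.
by apply: bigcap_measurable => // k _; exact: open_measurable.
Qed.

End aux.


Section shift.
Context {R : realType} (x : R).
Local Notation leb := (@lebesgue_measure R).
Local Open Scope ereal_scope.

Definition shiftm : set (measurableTypeR R) -> \bar R :=
  @pushforward _ _ (measurableTypeR R) (measurableTypeR R) R leb (fun h : R => (x + h)%R).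

Let mf : measurable_fun (setT : set (measurableTypeR R)) (fun h : measurableTypeR R => (x + h)%R : measurableTypeR R).
Proof. by apply: measurable_funD => //; exact: measurable_cst. Qed.

Let shiftm0 : shiftm set0 = 0.
Proof. by rewrite /shiftm /pushforward preimage_set0 measure0. Qed.

Let shiftm_ge0 A : 0 <= shiftm A.
Proof. by apply: measure_ge0. Qed.

Let shiftm_sigma_additive : semi_sigma_additive shiftm.
Proof.
move=> F mF tF mUF; rewrite /shiftm /pushforward preimage_bigcup.
apply: measure_semi_sigma_additive.
- by move=> n; rewrite -[X in measurable X]setTI; exact: mf.
- apply/trivIsetP => /= i j _ _ ij; rewrite -preimage_setI.
  by move/trivIsetP : tF => /(_ _ _ _ _ ij) ->//; rewrite preimage_set0.
- by rewrite -preimage_bigcup -[X in measurable X]setTI; exact: mf.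
Qed.

HB.instance Definition _ := isMeasure.Build _ _ _
  shiftm shiftm0 shiftm_ge0 shiftm_sigma_additive.

Lemma leb_shift (G : set R) : measurable G -> leb [set h | G (x + h)%R] = leb G.
Proof.
move=> mG; symmetry.
have -> : leb [set h | G (x + h)%R] = shiftm G by [].
apply: (@lebesgue_measure_unique R shiftm) => // X /ocitvP [->|[[a b] /= ab ->]].
  by rewrite measure0.
rewrite /shiftm /pushforward.
have -> : [eta +%R x] @^-1` `]a, b]%classic = `](a - x)%R, (b - x)%R]%classic.
  apply/seteqP; split => h /=; rewrite !in_itv /=.
    by move=> /andP[ah hb]; rewrite ltrBlDl lerBrDl ah hb.
  by rewrite ltrBlDl lerBrDl.
rewrite !lebesgue_measure_itv /= !lte_fin ltrD2r ab.
by rewrite -!EFinB opprB addrA subrK.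
Qed.

End shift.


Section onedim.
Context {R : realType}.
Local Notation leb := (@lebesgue_measure R).
Local Open Scope ereal_scope.

Lemma measurable_sum2 : measurable_fun setT (fun z : R * R => (z.1 + z.2)%R).
Proof. by apply: measurable_funD; [exact: measurable_fst|exact: measurable_snd]. Qed.

Lemma one_dim (S G : set R) (h : R) : measurable S -> measurable G -> (0 < h)%R ->
  (forall h', (0 < h' <= h)%R -> leb [set x | S x /\ ~ G (x + h')%R] = 0) ->
  0 < leb S -> h%:E <= leb G.
Proof.
move=> mS mG h0 hyp S0.
pose N := [set z : R * R | S z.1 /\ (0 < z.2 <= h)%R /\ ~ G (z.1 + z.2)%R].
have mN : measurable N.
  have -> : N = (S `*` `]0%R, h]) `&` ((fun z : R * R => (z.1 + z.2)%R) @^-1` ~` G).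
    apply/seteqP; split => -[a b] /=; rewrite ?in_itv /=.
      by move=> [Sa [hb nG]].
    by move=> [[Sa hb] nG].
  apply: measurableI; first by apply: measurableX => //; exact: measurable_itv.
  rewrite -[X in measurable X]setTI; apply: measurable_sum2 => //.
  exact: measurableC.
have N0 : (leb \x leb) N = 0.
  apply: pm_y0 => // y.
  have [yh|yh] := boolP (0 < y <= h)%R.
    rewrite -(hyp y yh); congr (leb _); apply/seteqP; split => a /=;
      rewrite /ysection /= inE /= /N /=.
      by move=> [Sa [_ nG]].
    by move=> [Sa nG].
  rewrite -[RHS](measure0 leb); congr (leb _); apply/seteqP; split => a //=.
  rewrite /ysection /= inE /= /N /=.
  by move=> [_ [yh' _]]; rewrite yh' in yh.
have mxs : measurable_fun setT (fun x => leb (xsection N x)).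
  exact: measurable_fun_xsection.
have : \int[leb]_(x in setT) `|leb (xsection N x)| = 0.
  rewrite -N0 /product_measure1; apply: eq_integral => x _.
  by rewrite gee0_abs.
move/(ae_eq_integral_abs leb measurableT mxs) => [M [mM M0 subM]].
have [x [Sx nMx]] : exists x, S x /\ ~ M x.
  apply: contrapT => nex.
  have : leb S <= leb M.
    apply: le_measure; rewrite ?inE //.
    move=> x Sx; apply: contrapT => nMx; apply: nex; by exists x.
  by rewrite M0 leNgt S0.
have Nx0 : leb (xsection N x) = 0.
  apply: contra_notP nMx => nz; apply: subM => /= /(_ I) e; exact: nz.
have mG' : measurable [set y | G (x + y)%R].
  have -> : [set y | G (x + y)%R] = (fun y => (x + y)%R) @^-1` G by [].
  rewrite -[X in measurable X]setTI.
  by apply: measurable_funD => //; exact: measurable_cst.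
have mxN : measurable (xsection N x) by exact: measurable_xsection.
apply: (@le_trans _ _ (leb ([set y | G (x + y)%R] `|` xsection N x))).
  have -> : h%:E = leb `]0%R, h]%classic.
    by rewrite lebesgue_measure_itv /= lte_fin h0 sube0.
  apply: le_measure; [rewrite inE; exact: measurable_itv|rewrite inE; exact: measurableU|].
  move=> y /= yi.
  have [Gy|nGy] := pselect (G (x + y)%R); [by left | right].
  by rewrite /xsection /= inE /N /=; split; [|split] => //; rewrite -in_itv.
apply: (le_trans (measureU2 leb mG' mxN)).
rewrite [X in _ + X](_ : _ = 0); last exact: Nx0.
rewrite adde0 [X in X <= _](_ : _ = leb G) //.
exact: leb_shift.
Qed.

End onedim.


Section core.
Context {R : realType}.
Local Notation leb := (@lebesgue_measure R).
Local Open Scope ereal_scope.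

Lemma mlev (g : R * R -> R) (c : R) : measurable_fun setT g ->
  measurable [set z | (c < `|g z|)%R].
Proof.
move=> mg.
have -> : [set z | (c < `|g z|)%R] = (Num.Def.normr \o g) @^-1` `]c, +oo[%classic.
  by apply/seteqP; split => z /=; rewrite in_itv /= andbT.
rewrite -[X in measurable X]setTI.
have mn := measurableT_comp (@normr_measurable R setT) mg.
by apply: mn => //; exact: measurable_itv.
Qed.

Lemma ediv_le (h : R) (m : \bar R) (c : R) : (0 < h)%R -> h%:E * m <= c%:E ->
  m <= (c / h)%:E.
Proof.
move=> h0 hm; rewrite mulrC EFinM lee_pdivlMl //.
Qed.

End core.


Section sec.
Context {R : realType}.
Local Notation leb := (@lebesgue_measure R).
Local Open Scope ereal_scope.

Lemma mlev1 (g : R -> R) (c : R) : measurable_fun setT g ->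
  measurable [set z | (c < `|g z|)%R].
Proof.
move=> mg.
have -> : [set z | (c < `|g z|)%R] = (Num.Def.normr \o g) @^-1` `]c, +oo[%classic.
  by apply/seteqP; split => z /=; rewrite in_itv /= andbT.
rewrite -[X in measurable X]setTI.
have mn := measurableT_comp (@normr_measurable R setT) mg.
by apply: mn => //; exact: measurable_itv.
Qed.

Lemma sec1 (F : R -> R) (lam ka kb h : R) : measurable_fun setT F -> (0 <= kb)%R -> (0 < h)%R ->
  (forall h', (0 < h' <= h)%R -> supnorm (Delta h' F) <= ka%:E) ->
  0 < leb [set x | (lam + ka + kb < `|F x|)%R] -> h%:E <= leb [set x | (lam < `|F x|)%R].
Proof.
move=> mF kb0 h0 hyp S0.
apply: (@one_dim R _ _ h (mlev1 F (lam+ka+kb)%R mF) (mlev1 F lam mF) h0) => // h' hh'.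
apply: (sup_null _ _ _ (hyp h' hh')).
  have -> : [set x | (lam + ka + kb < `|F x|)%R /\ ~ (lam < `|F (x + h')%R|)%R] =
    [set x | (lam + ka + kb < `|F x|)%R] `&` ((fun x => (x + h')%R) @^-1` ~` [set x | (lam < `|F x|)%R]) by [].
  apply: measurableI; first exact: mlev1.
  rewrite -[X in measurable X]setTI.
  have mfs : measurable_fun setT (fun x : R => (x + h')%R).
    by apply: measurable_funD => //; exact: measurable_cst.
  by apply: mfs => //; apply: measurableC; exact: mlev1.
move=> x /= [Sx nG]; rewrite /Delta.
have le1 : (`|F (x + h')| <= lam)%R by rewrite leNgt; apply/negP.
have := lerB_dist (F x) (F (x + h')%R); rewrite distrC => le2.
lra.
Qed.

End sec.


Section core2.
Context {R : realType}.
Local Notation leb := (@lebesgue_measure R).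
Local Open Scope ereal_scope.

Lemma xsecE (f : R * R -> R) c x :
  xsection [set z | (c < `|f z|)%R] x = [set y | (c < `|f (x, y)|)%R].
Proof. by apply/seteqP; split => y; rewrite /xsection /= inE. Qed.

Lemma ysecE (f : R * R -> R) c y :
  ysection [set z | (c < `|f z|)%R] y = [set x | (c < `|f (x, y)|)%R].
Proof. by apply/seteqP; split => x; rewrite /ysection /= inE. Qed.

Lemma core2 (f : R * R -> R) (lam ka kb h g : R) (X0 Y0 : set R) :
  measurable_fun setT f -> (0 <= ka)%R -> (0 <= kb)%R -> (0 < h)%R ->
  measurable X0 -> measurable Y0 ->
  (forall y, ~ Y0 y -> forall h', (0 < h' <= h)%R ->
     supnorm (Delta h' (fun x => f (x, y))) <= ka%:E) ->
  (forall x, ~ X0 x -> forall h', (0 < h' <= h)%R ->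
     supnorm (Delta h' (fun y => f (x, y))) <= kb%:E) ->
  (leb \x leb) [set z | (lam < `|f z|)%R] <= g%:E ->
  (leb \x leb) [set z | (lam + ka + kb < `|f z|)%R] <=
    ((g / h)%:E + leb X0) * ((g / h)%:E + leb Y0).
Proof.
move=> mf ka0 kb0 h0 mX0 mY0 hrow hcol hG.
set E := [set z | (lam + ka + kb < `|f z|)%R].
set G := [set z | (lam < `|f z|)%R].
have mE : measurable E by exact: mlev.
have mG : measurable G by exact: mlev.
pose X1 := [set x | 0 < leb (xsection E x)].
pose Y1 := [set y | 0 < leb (ysection E y)].
have mX1 : measurable X1.
  have -> : X1 = (fun x => leb (xsection E x)) @^-1` `]0, +oo[%classic.
    by apply/seteqP; split => x; rewrite /X1 /= in_itv /= andbT.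
  rewrite -[X in measurable X]setTI.
  by apply: (measurable_fun_xsection leb mE) => //; exact: emeasurable_itv.
have mY1 : measurable Y1.
  have -> : Y1 = (fun y => leb (ysection E y)) @^-1` `]0, +oo[%classic.
    by apply/seteqP; split => x; rewrite /Y1 /= in_itv /= andbT.
  rewrite -[X in measurable X]setTI.
  by apply: (measurable_fun_ysection leb mE) => //; exact: emeasurable_itv.
have hY : leb Y1 <= (g / h)%:E + leb Y0.
  have : h%:E * leb (Y1 `\` Y0) <= (leb \x leb) G.
    apply: pm_ylb => //; [exact: measurableD|exact: ltW|].
    move=> y [Y1y nY0y]; rewrite ysecE.
    apply: (sec1 _ lam ka kb h) => //.
    - exact: (measurableT_comp mf (pair2_measurable y)).
    - by move=> h' hh'; apply: hrow.
    - by move: Y1y; rewrite /Y1 /= ysecE.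
  move=> /le_trans /(_ hG) /(ediv_le _ _ _ h0) hD.
  apply: (le_trans _ (leeD hD (lexx _))).
  apply: le_trans (measureU2 leb (measurableD mY1 mY0) mY0).
  apply: le_measure; [apply/mem_set; exact: mY1|apply/mem_set; apply: measurableU => //; exact: measurableD|].
  by move=> z Y1z; have [Y0z|nY0z] := pselect (Y0 z); [right|left].
have hX : leb X1 <= (g / h)%:E + leb X0.
  have : h%:E * leb (X1 `\` X0) <= (leb \x leb) G.
    apply: pm_xlb => //; [exact: measurableD|exact: ltW|].
    move=> x [X1x nX0x]; rewrite xsecE.
    apply: (sec1 _ lam kb ka h) => //.
    - exact: (measurableT_comp mf (pair1_measurable x)).
    - by move=> h' hh'; apply: hcol.
    - by move: X1x; rewrite /X1 /= xsecE (addrAC lam).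
  move=> /le_trans /(_ hG) /(ediv_le _ _ _ h0) hD.
  apply: (le_trans _ (leeD hD (lexx _))).
  apply: le_trans (measureU2 leb (measurableD mX1 mX0) mX0).
  apply: le_measure; [apply/mem_set; exact: mX1|apply/mem_set; apply: measurableU => //; exact: measurableD|].
  by move=> z X1z; have [X0z|nX0z] := pselect (X0 z); [right|left].
pose N1 := E `&` (~` X1 `*` setT).
pose N2 := E `&` (setT `*` ~` Y1).
have mN1 : measurable N1.
  by apply: measurableI => //; apply: measurableX => //; exact: measurableC.
have mN2 : measurable N2.
  by apply: measurableI => //; apply: measurableX => //; exact: measurableC.
have N10 : (leb \x leb) N1 = 0.
  apply: pm_x0 => x; have [X1x|nX1x] := pselect (X1 x).
    rewrite (_ : xsection N1 x = set0) ?measure0 //.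
    apply/seteqP; split => y //=; rewrite /xsection /= inE.
    by move=> [_ []].
  apply/eqP; rewrite eq_le measure_ge0 andbT.
  apply: (@le_trans _ _ (leb (xsection E x))).
    apply: le_measure; [apply/mem_set; exact: measurable_xsection|
      apply/mem_set; exact: measurable_xsection|].
    by move=> y; rewrite /xsection /= !inE => -[].
  by rewrite leNgt; apply/negP.
have N20 : (leb \x leb) N2 = 0.
  apply: pm_y0 => // y; have [Y1y|nY1y] := pselect (Y1 y).
    rewrite (_ : ysection N2 y = set0) ?measure0 //.
    apply/seteqP; split => x //=; rewrite /ysection /= inE.
    by move=> [_ []].
  apply/eqP; rewrite eq_le measure_ge0 andbT.
  apply: (@le_trans _ _ (leb (ysection E y))).
    apply: le_measure; [apply/mem_set; exact: measurable_ysection|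
      apply/mem_set; exact: measurable_ysection|].
    by move=> x; rewrite /ysection /= !inE => -[].
  by rewrite leNgt; apply/negP.
have mXY : measurable (X1 `*` Y1) by exact: measurableX.
apply: (@le_trans _ _ ((leb \x leb) (X1 `*` Y1 `|` N1 `|` N2))).
  apply: le_measure; [apply/mem_set; exact: mE|
    apply/mem_set; apply: measurableU => //; exact: measurableU|].
  move=> [x y] Ez.
  have [X1x|nX1x] := pselect (X1 x); last by left; right.
  have [Y1y|nY1y] := pselect (Y1 y); last by right.
  by left; left.
have mXYN1 : measurable (X1 `*` Y1 `|` N1) by exact: measurableU.
apply: (le_trans (measureU2 (leb \x leb) mXYN1 mN2)).
rewrite [X in _ + X](_ : _ = 0) ?adde0; last exact: N20.
apply: (le_trans (measureU2 (leb \x leb) mXY mN1)).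
rewrite [X in _ + X](_ : _ = 0) ?adde0; last exact: N10.
rewrite [X in X <= _](_ : _ = leb X1 * leb Y1); last exact: product_measure1E.
by apply: lee_pmul => //; exact: measure_ge0.
Qed.

End core2.


Section s0.
Context {R : realType}.
Local Notation leb := (@lebesgue_measure R).
Local Open Scope ereal_scope.

Lemma cover_lemma (Z : set (R * R)) (X Y : set R) : measurable Z -> measurable X -> measurable Y ->
  (forall x, ~ X x -> leb (xsection Z x) = 0) ->
  (forall y, ~ Y y -> leb (ysection Z y) = 0) ->
  (leb \x leb) Z <= leb X * leb Y.
Proof.
move=> mZ mX mY hx hy.
pose N1 := Z `&` (~` X `*` setT).
pose N2 := Z `&` (setT `*` ~` Y).
have mN1 : measurable N1.
  by apply: measurableI => //; apply: measurableX => //; exact: measurableC.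
have mN2 : measurable N2.
  by apply: measurableI => //; apply: measurableX => //; exact: measurableC.
have N10 : (leb \x leb) N1 = 0.
  apply: pm_x0 => x; have [Xx|nXx] := pselect (X x).
    rewrite (_ : xsection N1 x = set0) ?measure0 //.
    apply/seteqP; split => y //=; rewrite /xsection /= inE.
    by move=> [_ []].
  apply/eqP; rewrite eq_le measure_ge0 andbT -(hx x nXx).
  apply: le_measure; [apply/mem_set; exact: measurable_xsection|
    apply/mem_set; exact: measurable_xsection|].
  by move=> y; rewrite /xsection /= !inE => -[].
have N20 : (leb \x leb) N2 = 0.
  apply: pm_y0 => // y; have [Yy|nYy] := pselect (Y y).
    rewrite (_ : ysection N2 y = set0) ?measure0 //.
    apply/seteqP; split => x //=; rewrite /ysection /= inE.
    by move=> [_ []].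
  apply/eqP; rewrite eq_le measure_ge0 andbT -(hy y nYy).
  apply: le_measure; [apply/mem_set; exact: measurable_ysection|
    apply/mem_set; exact: measurable_ysection|].
  by move=> x; rewrite /ysection /= !inE => -[].
have mXY : measurable (X `*` Y) by exact: measurableX.
apply: (@le_trans _ _ ((leb \x leb) (X `*` Y `|` N1 `|` N2))).
  apply: le_measure; [apply/mem_set; exact: mZ|
    apply/mem_set; apply: measurableU => //; exact: measurableU|].
  move=> [x y] Ez.
  have [Xx|nXx] := pselect (X x); last by left; right.
  have [Yy|nYy] := pselect (Y y); last by right.
  by left; left.
have mXYN1 : measurable (X `*` Y `|` N1) by exact: measurableU.
apply: (le_trans (measureU2 (leb \x leb) mXYN1 mN2)).
rewrite [X in _ + X](_ : _ = 0) ?adde0; last exact: N20.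
apply: (le_trans (measureU2 (leb \x leb) mXY mN1)).
rewrite [X in _ + X](_ : _ = 0) ?adde0; last exact: N10.
by rewrite [X in X <= _](_ : _ = leb X * leb Y); last exact: product_measure1E.
Qed.

Lemma rearr_ge0 d (T : measurableType d) (mu : set T -> \bar R) g t : 0 <= rearr mu g t.
Proof.
by apply/ereal_infP => _ [s [s0 _] <-]; rewrite lee_fin.
Qed.

Lemma rearr_le d (T : measurableType d) (mu : set T -> \bar R) g t (v : R) : (0 <= v)%R ->
  mu [set x | v%:E < `|g x|] <= t%:E -> rearr mu g t <= v%:E.
Proof. by move=> v0 hv; apply: ereal_inf_lbound; exists v. Qed.

Lemma rearr_lt d (T : measurableType d) (mu : set T -> \bar R) g t (x : R) :
  rearr mu g t < x%:E -> exists v : R, [/\ (0 <= v)%R, mu [set z | v%:E < `|g z|] <= t%:E & (v < x)%R].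
Proof.
move=> /ereal_inf_lt [_ [v [v0 hv] <-]]; rewrite lte_fin => vx.
by exists v.
Qed.

End s0.


Section s9.
Context {R : realType}.
Local Notation leb := (@lebesgue_measure R).
Local Open Scope ereal_scope.

Lemma lipsemi_bound (al a h h' : R) (phi : R -> R) : (0 < al)%R -> (0 < h' <= h)%R -> (0 <= a)%R ->
  lipsemi al phi <= a%:E -> supnorm (Delta h' phi) <= (a * powR h al)%:E.
Proof.
move=> al0 /andP[h'0 h'h] a0 hl.
have hp : (0 < powR h' (- al))%R by rewrite powR_gt0.
have : (powR h' (- al))%:E * supnorm (Delta h' phi) <= a%:E.
  apply: le_trans hl; apply: ereal_sup_ubound; by exists h'.
move=> /(ediv_le _ _ _ hp) /le_trans; apply.
rewrite lee_fin powRN invrK ler_wpM2l //.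
apply: (ge0_ler_powR (ltW al0)) => //.
- by rewrite nnegrE ltW.
- by rewrite nnegrE ltW // (lt_le_trans h'0).
Qed.

Lemma lipnorm_sup (al : R) (phi : R -> R) : supnorm phi <= `|lipnorm al phi|.
Proof.
apply: le_trans (lee_abs _).
by rewrite /lipnorm; apply: leeDl; exact: lipsemi_ge0.
Qed.

Lemma abs_EFin_set d (T : measurableType d) (f : T -> R) (s : R) :
  [set z | s%:E < `|(EFin \o f) z|] = [set z | (s < `|f z|)%R].
Proof. by apply/seteqP; split => z /=; rewrite lte_fin. Qed.

Lemma mlevE (g : R -> \bar R) (s : R) : measurable_fun setT g ->
  measurable [set x | s%:E < `|g x|].
Proof.
move=> mg.
have -> : [set x | s%:E < `|g x|] = (abse \o g) @^-1` `]s%:E, +oo[%classic.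
  by apply/seteqP; split => z /=; rewrite in_itv /= andbT.
rewrite -[X in measurable X]setTI.
have mn := measurableT_comp (@abse_measurable R setT) mg.
by apply: mn => //; exact: emeasurable_itv.
Qed.

Lemma S0_part (p : R) (f : R * R -> R) : Up p f -> S0 leb2 (EFin \o f).
Proof.
move=> [mf _ _ [[ml1 _ fin1] _] [[ml2 _ fin2] _]].
split.
- by apply/measurable_EFinP.
- exists set0; split => //.
  by move=> z /= nf; apply: nf.
- move=> s s0; rewrite abs_EFin_set /leb2.
  set Xs := [set x | s%:E < `|lipnorm p^-1 (fun y => f (x, y))|].
  set Ys := [set y | s%:E < `|lipnorm p^-1 (fun x => f (x, y))|].
  have mXs : measurable Xs by exact: mlevE.
  have mYs : measurable Ys by exact: mlevE.
  have mZ : measurable [set z | (s < `|f z|)%R] by exact: mlev.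
  have hx : forall x, ~ Xs x -> leb (xsection [set z | (s < `|f z|)%R] x) = 0.
    move=> x nXx; rewrite xsecE.
    apply: (sup_null (fun y => f (x, y)) s); last by [].
      apply: le_trans (lipnorm_sup p^-1 _) _.
      by rewrite leNgt; apply/negP.
    exact: (mlev1 _ _ (measurableT_comp mf (pair1_measurable x))).
  have hy : forall y, ~ Ys y -> leb (ysection [set z | (s < `|f z|)%R] y) = 0.
    move=> y nYy; rewrite ysecE.
    apply: (sup_null (fun x => f (x, y)) s); last by [].
      apply: le_trans (lipnorm_sup p^-1 _) _.
      by rewrite leNgt; apply/negP.
    exact: (mlev1 _ _ (measurableT_comp mf (pair2_measurable y))).
  apply: (le_lt_trans (cover_lemma _ _ _ mZ mXs mYs hx hy)).
  apply: lte_mul_pinfty => //.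
    by rewrite ge0_fin_numE // (fin2 _ s0).
  exact: fin1.
Qed.

End s9.


Theorem mainTheorem5 (R : realType) (p : R) (hp : 1 <= p) :
  exists c : R, 0 < c /\
    forall f : R * R -> R, Up p f ->
      S0 leb2 (EFin \o f) /\
      forall t : R, 0 < t ->
        (rearr leb2 (EFin \o f) t - rearr leb2 (EFin \o f) (2 * t)%R
         <= (EFin (c * powR t (2 * p)^-1)%R) *
            (rearr lebesgue_measure
                 (fun y => lipsemi p^-1 (fun x => f (x, y))) (Num.sqrt t / 2)%R
             + rearr lebesgue_measure
                 (fun x => lipsemi p^-1 (fun y => f (x, y))) (Num.sqrt t / 2)%R))%E.
Proof.
exists 4; split => //.
move=> f hU; split; first exact: S0_part hU.
move=> t t0.
have p0 : 0 < p by exact: (lt_le_trans ltr01 hp).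
have al0 : 0 < p^-1 by rewrite invr_gt0.
have al1 : p^-1 <= 1 by rewrite invf_le1.
have sq0 : 0 < Num.sqrt t by rewrite sqrtr_gt0.
have sqsq : Num.sqrt t * Num.sqrt t = t by rewrite -expr2 sqr_sqrtr // ltW.
set tau := powR t (2 * p)^-1.
have tau0 : 0 < tau by rewrite powR_gt0.
set h := 4 * Num.sqrt t.
have h0 : 0 < h by rewrite mulr_gt0.
set H := powR h p^-1.
have H0 : 0 <= H by exact: powR_ge0.
have H4 : H <= 4 * tau.
  rewrite /H /h powRM //.
  have -> : powR (Num.sqrt t) p^-1 = tau.
    rewrite -powR12_sqrt ?ltW // -powRrM /tau invfM.
    by rewrite mulrC.
  apply: ler_wpM2r; first exact: ltW.
  by apply: ler1_powR => //; rewrite ler1n.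
set s0 := Num.sqrt t / 2.
set phi1 := fun y => lipsemi p^-1 (fun x => f (x, y)).
set phi2 := fun x => lipsemi p^-1 (fun y => f (x, y)).
set F := EFin \o f.
have A0 := rearr_ge0 _ _ lebesgue_measure phi1 s0.
have B0 := rearr_ge0 _ _ lebesgue_measure phi2 s0.
have c0 : (0 < 4 * tau)%R by rewrite mulr_gt0.
case EA : (rearr lebesgue_measure phi1 s0) A0 => [a0| |] // A0; last first.
  have Bn : rearr lebesgue_measure phi2 s0 != -oo%E.
    by apply/negP => /eqP hb; rewrite hb in B0.
  rewrite addye // mulry gtr0_sg // mul1e; exact: leey.
case EB : (rearr lebesgue_measure phi2 s0) B0 => [b0| |] // B0; last first.
  rewrite addey // mulry gtr0_sg // mul1e; exact: leey.
case EL : (rearr leb2 F (2 * t)) => [l| |]; last first.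
- by have := rearr_ge0 _ _ leb2 F (2 * t); rewrite EL.
- have -> : (rearr leb2 F t - +oo = -oo)%E by case: (rearr leb2 F t).
  exact: leNye.
rewrite leeBlDr //.
apply/lee_addgt0Pr => e e0.
set eps := e / (1 + 2 * H).
have eps0 : 0 < eps by rewrite divr_gt0 // ltr_pwDl // mulr_ge0.
have epsE : eps * (1 + 2 * H) = e.
  by rewrite /eps mulfVK // gt_eqF // ltr_pwDl // mulr_ge0.
have [a [a0' ha aa0]] : exists a : R, [/\ 0 <= a,
    (lebesgue_measure [set y | (a%:E < `|phi1 y|)%E] <= s0%:E)%E & a < a0 + eps].
  have lt : (rearr lebesgue_measure phi1 s0 < (a0 + eps)%:E)%E by rewrite EA lte_fin ltrDl.
  exact: rearr_lt lt.
have [b [b0' hb bb0]] : exists b : R, [/\ 0 <= b,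
    (lebesgue_measure [set y | (b%:E < `|phi2 y|)%E] <= s0%:E)%E & b < b0 + eps].
  have lt : (rearr lebesgue_measure phi2 s0 < (b0 + eps)%:E)%E by rewrite EB lte_fin ltrDl.
  exact: rearr_lt lt.
have [lam [lam0 hl ll]] : exists lam : R, [/\ 0 <= lam,
    (leb2 [set z | (lam%:E < `|F z|)%E] <= (2 * t)%:E)%E & lam < l + eps].
  have lt : (rearr leb2 F (2 * t) < (l + eps)%:E)%E by rewrite EL lte_fin ltrDl.
  exact: rearr_lt lt.
have [U1 [mU1 sU1 eU1]] := outer_cover [set y | (a%:E < `|phi1 y|)%E].
have [U2 [mU2 sU2 eU2]] := outer_cover [set y | (b%:E < `|phi2 y|)%E].
have mf : measurable_fun setT f by case: hU.
have key := @core2 R f lam (a * H) (b * H) h (2 * t) U2 U1 mf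
  (mulr_ge0 a0' H0) (mulr_ge0 b0' H0) h0 mU2 mU1.
have hrow : forall y, ~ U1 y -> forall h', 0 < h' <= h ->
    (supnorm (Delta h' (fun x => f (x, y))) <= (a * H)%:E)%E.
  move=> y nU1 h' hh'; apply: lipsemi_bound => //.
  apply: le_trans (lee_abs _) _.
  by rewrite leNgt; apply/negP => ay; apply: nU1; apply: sU1.
have hcol : forall x, ~ U2 x -> forall h', 0 < h' <= h ->
    (supnorm (Delta h' (fun y => f (x, y))) <= (b * H)%:E)%E.
  move=> x nU2 h' hh'; apply: lipsemi_bound => //.
  apply: le_trans (lee_abs _) _.
  by rewrite leNgt; apply/negP => bx; apply: nU2; apply: sU2.
have hG : (leb2 [set z | (lam < `|f z|)%R] <= (2 * t)%:E)%E.
  by move: hl; rewrite /F abs_EFin_set.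
have := key hrow hcol hG.
have e2t : 2 * t / h = s0.
  rewrite /h /s0 -{1}sqsq; field.
  by rewrite gt_eqF.
rewrite e2t eU1 eU2 => hE.
have hE' : (leb2 [set z | (lam + a * H + b * H < `|f z|)%R] <= t%:E)%E.
  apply: le_trans hE _.
  have tE : (t%:E = (s0%:E + s0%:E) * (s0%:E + s0%:E))%E.
    rewrite -EFinD -EFinM; congr EFin.
    by rewrite -[LHS]sqsq /s0; field.
  rewrite tE.
  have s00 : (0 <= s0%:E)%E by rewrite lee_fin divr_ge0 // ltW.
  apply: lee_pmul.
  - apply: adde_ge0; first exact: s00.
    exact: (measure_ge0 (@lebesgue_measure R)).
  - apply: adde_ge0; first exact: s00.
    exact: (measure_ge0 (@lebesgue_measure R)).
  - exact: (leeD (lexx _) hb).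
  - exact: (leeD (lexx _) ha).
have v0 : 0 <= lam + a * H + b * H by rewrite !addr_ge0 // mulr_ge0.
have setE : [set z | ((lam + a * H + b * H)%:E < `|F z|)%E] =
    [set z | (lam + a * H + b * H < `|f z|)%R].
  by apply/seteqP; split => z /=; rewrite lte_fin.
have hE2 : (leb2 [set z | ((lam + a * H + b * H)%:E < `|F z|)%E] <= t%:E)%E.
  by rewrite setE.
have hr := rearr_le _ _ leb2 F t _ v0 hE2.
apply: (le_trans hr).
rewrite -EFinM -!EFinD lee_fin.
have h1 : a * H <= (a0 + eps) * H by rewrite ler_wpM2r // ltW.
have h2 : b * H <= (b0 + eps) * H by rewrite ler_wpM2r // ltW.
have A0' : 0 <= a0 by rewrite -lee_fin.
have B0' : 0 <= b0 by rewrite -lee_fin.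
have h3 : (a0 + b0) * H <= (a0 + b0) * (4 * tau).
  by apply: ler_wpM2l; [exact: addr_ge0|exact: H4].
have h4 : (a0 + eps) * H + (b0 + eps) * H = (a0 + b0) * H + 2 * (eps * H) by ring.
have h5 : e = eps + 2 * (eps * H) by rewrite -epsE; ring.
have h6 : 4 * tau * (a0 + b0) = (a0 + b0) * (4 * tau) by ring.
rewrite h6.
lra.
Qed.
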